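(* Let $n\ge3$, $\boldsymbol\ell$ positive lengths, $\mu,\tau^*\in\mathbb{R}$, $N>0$ a smooth function on $T^n$ depending only on $s^1$, and $Z=z(s^1)\partial_{s^1}$ a smooth vector field. Consider the CTS-H$^{**}$ conformal data set $(g_{\boldsymbol\ell},\mu\sigma^\flat_{\boldsymbol\ell},\tau^*,Z,N)$. (1) If $\mu$ and $\tau^*$ are nonzero and have the same sign, then $\phi\equiv c=(\mu/\tau^* )^{1/q}$, $W=Z$ is a solution of the CTS-H$^{**}$ equations, and the generated solution of the constraint equations is $$\bar g=g_{r\boldsymbol\ell},\qquad \bar K=\bar\tau\,(r\ell_1)^2(ds^1)^2,\qquad \bar\tau=\tau^*+c^{-q}\tfrac1N\mathrm{div}_{g_{\boldsymbol\ell}}Z,\qquad r=c^{(q-2)/2}=(\mu/\tau^* )^{1/n}.$$ (2) If $\mu=\tau^*=0$, then for every $c>0$, $\phi\equiv c$, $W=Z$ is a solution of the CTS-H$^{**}$ equations, and the associated solution of the constraint equations is $\bar g=g_{r\boldsymbol\ell}$, $\bar K=\bar\tau(r\ell_1)^2(ds^1)^2$ with $\bar\tau=c^{-q}\frac1N\mathrm{div}_{g_{\boldsymbol\ell}}Z$ and $r=c^{(q-2)/2}$.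
   Context: $q=\frac{2n}{n-2}$, $\kappa=\frac{n-1}{n}$. $T^n=(\mathbb{R}/\mathbb{Z})^n$ with unit coordinates $(s^1,\ldots,s^n)$; $g_{\boldsymbol\ell}=\sum_k\ell_k^2(ds^k)^2$; $r\boldsymbol\ell=(r\ell_1,\ldots,r\ell_n)$; $\sigma^\flat_{\boldsymbol\ell}=\kappa\ell_1^2(ds^1)^2-\frac1n\sum_{k\ge2}\ell_k^2(ds^k)^2$ (transverse-traceless for $g_{\boldsymbol\ell}$). $\mathcal{L}_gW=L_Wg-\frac2n(\mathrm{div}_gW)g$. CTS-H$^{**}$ (drift-parameterized mean curvature) method: data $(g,\sigma,\tau^*,Z,N)$ with $\sigma$ transverse-traceless, $\tau^*$ constant, $Z$ a vector field (the drift), $N>0$. A solution of the CTS-H$^{**}$ equations is a pair $(\phi,W)$, $\phi>0$, $W$ a vector field, such that $$\bar g=\phi^{q-2}g,\qquad \bar K=\phi^{-2}\Big(\sigma+\tfrac1{2N}\mathcal{L}_gW\Big)+\frac{\tau^*+\frac{\phi^{-2q}}{N}\mathrm{div}_g(\phi^qZ)}{n}\bar g$$ solves the Einstein constraint equations $R_{\bar g}-|\bar K|^2+(\mathrm{tr}\bar K)^2=0$, $\mathrm{div}_{\bar g}\bar K=d\,\mathrm{tr}_{\bar g}\bar K$; this is the generated solution. *)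

(* Defs.v *)
(* Coordinates on T^n = (R/Z)^n are represented by points of 'rV[R]_n;
   fields on T^n are Z^n-torus_periodic fields on R^n written in the unit
   coordinates s = (s^1,...,s^n).  The coordinate s^1 is the index with
   value 0 in 'I_n. *)
From HB Require Import structures.
From mathcomp Require Import all_boot all_order all_algebra.
From mathcomp Require Import all_classical all_reals all_analysis.
Set Implicit Arguments. Unset Strict Implicit. Unset Printing Implicit Defensive.
Import Order.TTheory GRing.Theory Num.Theory.
Import numFieldNormedType.Exports.
Local Open Scope ring_scope.

Section Geometry.
Variables (R : realType) (n : nat).
Local Notation pt := 'rV[R]_n.

Definition qexp : R := 2 * n%:R / (n%:R - 2).
Definition kappa : R := (n%:R - 1) / n%:R.

Definition unitv (i : 'I_n) : pt := delta_mx 0 i.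
Definition pd (i : 'I_n) (f : pt -> R) (x : pt) : R := 'D_(unitv i) f x.

Definition is_first (i : 'I_n) : bool := (val i == 0)%N.
Definition s1 (x : pt) : R := \sum_(i < n | is_first i) x 0 i.

Definition torus_periodic (T : Type) (f : pt -> T) : Prop :=
  forall (x : pt) (i : 'I_n), f (x + unitv i) = f x.

Fixpoint smoothN (k : nat) (f : pt -> R) : Prop :=
  match k with
  | 0%N => True
  | k'.+1 => continuous f /\
       forall i : 'I_n, (forall x, derivable f x (unitv i)) /\ smoothN k' (pd i f)
  end.
Definition smooth (f : pt -> R) : Prop := forall k, smoothN k f.
Definition smooth_vf (W : pt -> pt) : Prop :=
  forall i : 'I_n, smooth (fun x => W x 0 i).

Definition s1_dependent (T : Type) (f : pt -> T) : Prop :=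
  forall x y : pt, s1 x = s1 y -> f x = f y.

Definition ginv (g : pt -> 'M[R]_n) (x : pt) : 'M[R]_n := invmx (g x).

Definition christ (g : pt -> 'M[R]_n) (x : pt) (k i j : 'I_n) : R :=
  2^-1 * \sum_(l < n) ginv g x k l *
    (pd i (fun y => g y j l) x + pd j (fun y => g y i l) x
     - pd l (fun y => g y i j) x).

Definition ricci (g : pt -> 'M[R]_n) (x : pt) (i j : 'I_n) : R :=
  \sum_(k < n) (pd k (fun y => christ g y k i j) x
                - pd j (fun y => christ g y k i k) x
                + \sum_(l < n) (christ g x k k l * christ g x l i j
                                - christ g x k j l * christ g x l i k)).

Definition scal (g : pt -> 'M[R]_n) (x : pt) : R :=
  \sum_(i < n) \sum_(j < n) ginv g x i j * ricci g x i j.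

Definition divV (g : pt -> 'M[R]_n) (W : pt -> pt) (x : pt) : R :=
  \sum_(k < n) (pd k (fun y => W y 0 k) x
                + W x 0 k * \sum_(j < n) christ g x j j k).

Definition lieg (g : pt -> 'M[R]_n) (W : pt -> pt) (x : pt) : 'M[R]_n :=
  \matrix_(i < n, j < n) \sum_(k < n)
     (W x 0 k * pd k (fun y => g y i j) x
      + g x k j * pd i (fun y => W y 0 k) x
      + g x i k * pd j (fun y => W y 0 k) x).

Definition CKO (g : pt -> 'M[R]_n) (W : pt -> pt) (x : pt) : 'M[R]_n :=
  lieg g W x - (2 / n%:R * divV g W x) *: g x.

Definition trK (g K : pt -> 'M[R]_n) (x : pt) : R :=
  \sum_(i < n) \sum_(j < n) ginv g x i j * K x i j.

Definition normsqK (g K : pt -> 'M[R]_n) (x : pt) : R :=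
  \sum_(i < n) \sum_(j < n) \sum_(a < n) \sum_(b < n)
     ginv g x i a * ginv g x j b * K x i j * K x a b.

Definition divK (g K : pt -> 'M[R]_n) (x : pt) (j : 'I_n) : R :=
  \sum_(i < n) \sum_(k < n) ginv g x i k *
     (pd k (fun y => K y i j) x
      - \sum_(l < n) (christ g x l k i * K x l j + christ g x l k j * K x i l)).

Definition constraints (g K : pt -> 'M[R]_n) : Prop :=
  (forall x, scal g x - normsqK g K x + (trK g K x) ^+ 2 = 0) /\
  (forall x j, divK g K x j = pd j (trK g K) x).

Definition cts_gbar (g : pt -> 'M[R]_n) (phi : pt -> R) (x : pt) : 'M[R]_n :=
  (phi x `^ (qexp - 2)) *: g x.

Definition cts_Kbar (g sigma : pt -> 'M[R]_n) (taus : R) (Z : pt -> pt)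
    (N : pt -> R) (phi : pt -> R) (W : pt -> pt) (x : pt) : 'M[R]_n :=
  (phi x ^+ 2)^-1 *: (sigma x + (2 * N x)^-1 *: CKO g W x)
  + ((taus + (phi x `^ (2 * qexp))^-1 / N x
               * divV g (fun y => (phi y `^ qexp) *: Z y) x) / n%:R)
    *: cts_gbar g phi x.

Definition cts_solution (g sigma : pt -> 'M[R]_n) (taus : R) (Z : pt -> pt)
    (N : pt -> R) (phi : pt -> R) (W : pt -> pt) : Prop :=
  (forall x, 0 < phi x) /\ torus_periodic phi /\ smooth phi /\
  torus_periodic W /\ smooth_vf W /\
  constraints (cts_gbar g phi) (cts_Kbar g sigma taus Z N phi W).

Definition gell (ell : 'I_n -> R) (x : pt) : 'M[R]_n :=
  \matrix_(i < n, j < n) (if i == j then ell i ^+ 2 else 0).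

Definition sigflat (ell : 'I_n -> R) (x : pt) : 'M[R]_n :=
  \matrix_(i < n, j < n)
    (if i == j then (if is_first i then kappa * ell i ^+ 2
                     else - (n%:R^-1) * ell i ^+ 2) else 0).

Definition rell (r : R) (ell : 'I_n -> R) : 'I_n -> R := fun i => r * ell i.

Definition ds1sq_tensor (t : pt -> R) (r : R) (ell : 'I_n -> R) (x : pt)
  : 'M[R]_n :=
  \matrix_(i < n, j < n)
    (if (i == j) && is_first i then t x * (r * ell i) ^+ 2 else 0).

End Geometry.
Arguments qexp R n : clear implicits.
Arguments kappa R n : clear implicits.

(* Main.v *)
Require Import Defs.
From HB Require Import structures.
From mathcomp Require Import all_boot all_order all_algebra.
From mathcomp Require Import all_classical all_reals all_analysis.
From mathcomp Require Import ring lra.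
Import Order.TTheory GRing.Theory Num.Theory.
Import numFieldNormedType.Exports.
Local Open Scope ring_scope.

Section Helpers.
Variables (R : realType) (n : nat).
Local Notation pt := 'rV[R]_n.

Lemma derive_ext (f g : pt -> R) x y v :
  (forall h : R, f (h *: v + x) - f x = g (h *: v + y) - g y) ->
  'D_v f x = 'D_v g y.
Proof.
move=> H; rewrite /derive.
have -> : (fun h : R => h^-1 *: ((f \o shift x) (h *: v) - f x)) =
  (fun h : R => h^-1 *: ((g \o shift y) (h *: v) - g y)).
  by apply: funext => h /=; rewrite H.
by [].
Qed.

Lemma pd_cst0 i (k : R) (x : pt) : pd i (fun _ : pt => k) x = 0.
Proof. exact: derive_cst. Qed.

Lemma pd_const_dir (f : pt -> R) i x :
  (forall h : R, f (h *: unitv R i + x) = f x) -> pd i f x = 0.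
Proof.
move=> H; rewrite /pd (@derive_ext f (cst (f x)) x x) ?derive_cst // => h.
by rewrite H.
Qed.

Lemma s1D (x y : pt) : s1 (x + y) = s1 x + s1 y.
Proof. by rewrite /s1 -big_split; apply: eq_bigr => i _; rewrite !mxE. Qed.

Lemma s1_unit_nf (j : 'I_n) (h : R) : ~~ is_first j -> s1 (h *: unitv R j) = 0.
Proof.
move=> hj; apply: big1 => i hi; rewrite !mxE.
have -> : (i == j) = false by apply/negbTE; apply: contraTneq hi => ->.
by rewrite andbF mulr0.
Qed.

Lemma pd_s1_nf (f : pt -> R) j x :
  s1_dependent f -> ~~ is_first j -> pd j f x = 0.
Proof.
move=> hf hj; apply: pd_const_dir => h; apply: hf.
by rewrite s1D s1_unit_nf // add0r.
Qed.

Lemma pd_s1_dep (f : pt -> R) j : s1_dependent f -> s1_dependent (pd j f).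
Proof.
move=> hf x y hxy; apply: derive_ext => h.
by rewrite (hf (h *: unitv R j + x) (h *: unitv R j + y)) ?(hf x y) // !s1D hxy.
Qed.

Lemma smooth_derivable (f : pt -> R) i x : smooth f -> derivable f x (unitv R i).
Proof. by move=> hf; case: (hf 1%N) => _ /(_ i) [] /(_ x). Qed.

Lemma smooth_pd (f : pt -> R) i : smooth f -> smooth (pd i f).
Proof. by move=> hf k; case: (hf k.+1) => _ /(_ i) []. Qed.

Lemma smooth_cst (c : R) : smooth (fun _ : pt => c).
Proof.
move=> k; elim: k c => // k IH c; split; first exact: cst_continuous.
move=> i; split; first by move=> x; exact: derivable_cst.
rewrite (_ : pd i _ = fun _ => 0) //; apply: funext => x; exact: pd_cst0.
Qed.

Lemma christ0 (G : pt -> 'M[R]_n) x k i j :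
  (forall y z, G y = G z) -> christ G x k i j = 0.
Proof.
move=> H; rewrite /christ big1 ?mulr0 // => l _.
have E : forall a b, (fun y => G y a b) = fun _ => G x a b.
  by move=> a b; apply: funext => y; rewrite (H y x).
by rewrite !E !pd_cst0 addr0 subr0 mulr0.
Qed.

Lemma scal0 (G : pt -> 'M[R]_n) x : (forall y z, G y = G z) -> scal G x = 0.
Proof.
move=> H; rewrite /scal big1 // => i _; rewrite big1 // => j _.
rewrite /ricci big1 ?mulr0 // => k _.
have E : forall a b c, (fun y => christ G y a b c) = fun _ => 0.
  by move=> a b c; apply: funext => y; rewrite christ0.
rewrite !E !pd_cst0 subrr add0r big1 // => l _.
by rewrite !christ0 // !mul0r subrr.
Qed.

Lemma gell_diag (ell : 'I_n -> R) x : gell ell x = diag_mx (\row_i ell i ^+ 2).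
Proof. by apply/matrixP => i j; rewrite !mxE; case: eqP. Qed.

Lemma ginv_gell (ell : 'I_n -> R) x : (forall i, ell i != 0) ->
  ginv (gell ell) x = gell (fun i => (ell i)^-1) x.
Proof.
move=> h.
have hm : gell ell x *m gell (fun i => (ell i)^-1) x = 1%:M.
  rewrite !gell_diag mulmx_diag; apply/matrixP => i j; rewrite !mxE.
  by rewrite -exprMn mulfV // expr1n.
have [hu _] := mulmx1_unit hm.
by rewrite /ginv -[RHS](mulKmx hu) hm mulmx1.
Qed.


Lemma first_eq (i0 i : 'I_n) : is_first i0 -> is_first i = (i == i0).
Proof.
rewrite /is_first => /eqP h.
by rewrite (_ : (i == i0) = (val i == val i0)) // h.
Qed.

Lemma ginv_entry (ell : 'I_n -> R) x i j : (forall i, ell i != 0) ->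
  ginv (gell ell) x i j = if i == j then (ell i ^+ 2)^-1 else 0.
Proof. by move=> h; rewrite ginv_gell // mxE exprVn. Qed.

Lemma Kentry (t : pt -> R) (ell : 'I_n -> R) i0 x i j : is_first i0 ->
  ds1sq_tensor t 1 ell x i j = if (i == j) && (i == i0) then t x * ell i ^+ 2 else 0.
Proof. by move=> h0; rewrite mxE (first_eq i0 i h0) mul1r. Qed.

Lemma sum_collapse (F : 'I_n -> R) j : (forall i, i != j -> F i = 0) ->
  \sum_(i < n) F i = F j.
Proof. by move=> H; rewrite (bigD1 j) //= big1 ?addr0. Qed.

Lemma trK_diag (ell : 'I_n -> R) (t : pt -> R) x (i0 : 'I_n) : is_first i0 ->
  (forall i, ell i != 0) ->
  trK (gell ell) (ds1sq_tensor t 1 ell) x = t x.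
Proof.
move=> h0 h; rewrite /trK (sum_collapse _ i0).
  rewrite (sum_collapse _ i0).
    rewrite ginv_entry // (Kentry _ _ _ _ _ _ h0) !eqxx /= mulrC -mulrA mulfV ?mulr1 //.
    by rewrite expf_neq0.
  by move=> j hj; rewrite ginv_entry // eq_sym (negbTE hj) mul0r.
move=> i hi; apply: big1 => j _; rewrite ginv_entry // (Kentry _ _ _ _ _ _ h0) (negbTE hi) andbF.
by rewrite mulr0.
Qed.

Lemma normsqK_diag (ell : 'I_n -> R) (t : pt -> R) x (i0 : 'I_n) : is_first i0 ->
  (forall i, ell i != 0) ->
  normsqK (gell ell) (ds1sq_tensor t 1 ell) x = t x ^+ 2.
Proof.
move=> h0 h; set K := ds1sq_tensor t 1 ell.
have step : forall i j : 'I_n,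
  \sum_(a < n) \sum_(b < n) ginv (gell ell) x i a * ginv (gell ell) x j b * K x i j * K x a b
  = ginv (gell ell) x i i * ginv (gell ell) x j j * K x i j * K x i j.
  move=> i j; rewrite (sum_collapse _ i).
    rewrite (sum_collapse _ j) // => b hb.
    by rewrite (ginv_entry _ _ j) // eq_sym (negbTE hb) !(mulr0, mul0r).
  move=> a ha; apply: big1 => b _.
  by rewrite (ginv_entry _ _ i) // eq_sym (negbTE ha) !(mulr0, mul0r).
rewrite /normsqK.
under eq_bigr => i _ do under eq_bigr => j _ do rewrite step.
rewrite (sum_collapse _ i0).
  rewrite (sum_collapse _ i0).
    rewrite !ginv_entry // /K !(Kentry _ _ _ _ _ _ h0) !eqxx /=.
    have e : ell i0 ^+ 2 != 0 by rewrite expf_neq0.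
    by field.
  by move=> j hj; rewrite /K (Kentry _ _ _ _ _ _ h0) eq_sym (negbTE hj) /= !(mulr0, mul0r).
move=> i hi; apply: big1 => j _.
by rewrite /K (Kentry _ _ _ _ _ _ h0) (negbTE hi) andbF !(mulr0, mul0r).
Qed.

Lemma constraints_diag (ell : 'I_n -> R) (t : pt -> R) (i0 : 'I_n) : is_first i0 ->
  (forall i, ell i != 0) -> s1_dependent t ->
  (forall x, derivable t x (unitv R i0)) ->
  constraints (gell ell) (ds1sq_tensor t 1 ell).
Proof.
move=> h0 h hs hd.
have gc : forall y z : pt, gell ell y = gell ell z by [].
have trE : trK (gell ell) (ds1sq_tensor t 1 ell) = t.
  by apply: funext => x; apply: trK_diag h0 h.
split.
  move=> x; rewrite scal0 // (normsqK_diag _ _ _ _ h0) // trE; ring.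
move=> x j; rewrite trE /divK.
have E : forall i : 'I_n, \sum_(k < n) ginv (gell ell) x i k *
   (pd k (fun y => ds1sq_tensor t 1 ell y i j) x -
    \sum_(l < n) (christ (gell ell) x l k i * ds1sq_tensor t 1 ell x l j +
                  christ (gell ell) x l k j * ds1sq_tensor t 1 ell x i l))
   = (ell i ^+ 2)^-1 * pd i (fun y => ds1sq_tensor t 1 ell y i j) x.
  move=> i; rewrite (sum_collapse _ i).
    rewrite big1 ?subr0 ?ginv_entry ?eqxx // => l _.
    by rewrite !christ0 // !mul0r addr0.
  by move=> k hk; rewrite ginv_entry // eq_sym (negbTE hk) mul0r.
under eq_bigr => i _ do rewrite E.
have [hj|hj] := eqVneq j i0.
  subst j; rewrite (sum_collapse _ i0).
    have -> : (fun y => ds1sq_tensor t 1 ell y i0 i0) = (ell i0 ^+ 2) \*o t.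
      by apply: funext => y; rewrite (Kentry _ _ _ _ _ _ h0) eqxx /= mulrC.
    rewrite /pd deriveMl // mulrA mulVf ?mul1r //.
    by rewrite expf_neq0.
  move=> i hi.
  have -> : (fun y => ds1sq_tensor t 1 ell y i i0) = fun _ => 0.
    by apply: funext => y; rewrite (Kentry _ _ _ _ _ _ h0) (negbTE hi) andbF.
  by rewrite pd_cst0 mulr0.
rewrite pd_s1_nf ?(first_eq i0 j h0) //; apply: big1 => i _.
have -> : (fun y => ds1sq_tensor t 1 ell y i j) = fun _ => 0.
  apply: funext => y; rewrite (Kentry _ _ _ _ _ _ h0).
  by case: eqP => [->|] //=; rewrite (negbTE hj).
by rewrite pd_cst0 mulr0.
Qed.


Lemma divV_gell (ell : 'I_n -> R) (W : pt -> pt) x :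
  divV (gell ell) W x = \sum_(k < n) pd k (fun y => W y 0 k) x.
Proof.
apply: eq_bigr => k _; rewrite big1 ?mulr0 ?addr0 // => j _.
exact: christ0.
Qed.

Lemma divV_Z (ell : 'I_n -> R) (Z : pt -> pt) (i0 : 'I_n) x : is_first i0 ->
  (forall x (i : 'I_n), ~~ is_first i -> Z x 0 i = 0) ->
  divV (gell ell) Z x = pd i0 (fun y => Z y 0 i0) x.
Proof.
move=> h0 hZ; rewrite divV_gell (sum_collapse _ i0) // => k hk.
have -> : (fun y => Z y 0 k) = fun _ => 0.
  by apply: funext => y; rewrite hZ // (first_eq i0 k h0).
exact: pd_cst0.
Qed.

Lemma divV_PZ (ell : 'I_n -> R) (Z : pt -> pt) (P : R) x :
  smooth_vf Z ->
  divV (gell ell) (fun y => P *: Z y) x = P * divV (gell ell) Z x.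
Proof.
move=> hsm; rewrite !divV_gell mulr_sumr; apply: eq_bigr => k _.
have -> : (fun y => (P *: Z y) 0 k) = P \*o (fun y => Z y 0 k).
  by apply: funext => y; rewrite mxE.
by rewrite /pd deriveMl //; apply: smooth_derivable.
Qed.

Lemma pdZ (Z : pt -> pt) (i0 : 'I_n) x i k : is_first i0 ->
  (forall x (i : 'I_n), ~~ is_first i -> Z x 0 i = 0) -> s1_dependent Z ->
  pd i (fun y => Z y 0 k) x =
  if (i == i0) && (k == i0) then pd i0 (fun y => Z y 0 i0) x else 0.
Proof.
move=> h0 hZ hs.
have [->|hk] := eqVneq k i0; last first.
  have -> : (fun y => Z y 0 k) = fun _ => 0.
    by apply: funext => y; rewrite hZ // (first_eq i0 k h0).
  by rewrite andbF pd_cst0.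
have [->|hi] := eqVneq i i0; first by [].
rewrite /= pd_s1_nf ?(first_eq i0 i h0) //.
by move=> a b hab; rewrite (hs a b hab).
Qed.

Lemma lieg_entry (ell : 'I_n -> R) (Z : pt -> pt) (i0 : 'I_n) x i j : is_first i0 ->
  (forall x (i : 'I_n), ~~ is_first i -> Z x 0 i = 0) -> s1_dependent Z ->
  lieg (gell ell) Z x i j =
  if (i == j) && (i == i0) then 2 * ell i0 ^+ 2 * pd i0 (fun y => Z y 0 i0) x else 0.
Proof.
move=> h0 hZ hs; rewrite mxE !big_split /=.
rewrite big1 ?add0r; last first.
  move=> k _; have -> : (fun y => gell ell y i j) = fun _ => gell ell x i j by [].
  by rewrite pd_cst0 mulr0.
rewrite (sum_collapse _ j); last first.
  by move=> k hk; rewrite mxE (negbTE hk) mul0r.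
rewrite (sum_collapse _ i); last first.
  by move=> k hk; rewrite mxE eq_sym (negbTE hk) mul0r.
rewrite !mxE !eqxx (pdZ _ _ x i j h0 hZ hs) (pdZ _ _ x j i h0 hZ hs).
have [<-|hij] := eqVneq i j.
  rewrite andbb /=; case: eqP => [->|_]; last by rewrite mulr0 addr0.
  ring.
rewrite /=; case: eqP => [ei|]; case: eqP => [ej|] /=; rewrite ?mulr0 ?addr0 //.
by move: hij; rewrite ei ej eqxx.
Qed.


Lemma Kbar_eq (ell : 'I_n -> R) (mu taus c : R) (N : pt -> R) (Z : pt -> pt)
  (i0 : 'I_n) : (3 <= n)%N -> is_first i0 -> 0 < c ->
  mu = taus * c `^ qexp R n -> (forall x, 0 < N x) -> smooth_vf Z ->
  (forall x (i : 'I_n), ~~ is_first i -> Z x 0 i = 0) -> s1_dependent Z ->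
  cts_Kbar (gell ell) (fun x => mu *: sigflat ell x) taus Z N (fun _ => c) Z =
  ds1sq_tensor (fun x => taus + (c `^ qexp R n)^-1 / N x * divV (gell ell) Z x)
     (c `^ ((qexp R n - 2) / 2)) ell.
Proof.
move=> n3 h0 hc hmu hN hsm hZ hs.
apply: funext => x; apply/matrixP => i j.
set q := qexp R n.
have n3R : (3 : R) <= n%:R by rewrite ler_nat.
have hn : (n%:R : R) != 0 by apply/eqP => e; rewrite e in n3R; lra.
have hn2 : (n%:R : R) - 2 != 0 by apply/eqP => e; lra.
have hP : 0 < c `^ q by apply: powR_gt0.
have e2q : c `^ (2 * q) = (c `^ q) ^+ 2.
  by rewrite mulrC powRrM powR_mulrn ?powR_ge0.
have eq2 : c `^ (q - 2) = c `^ q / c ^+ 2.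
  rewrite powRB; last by rewrite (gt_eqF hc) implybT.
  by rewrite powR_mulrn // ltW.
have er2 : (c `^ ((q - 2) / 2)) ^+ 2 = c `^ (q - 2).
  rewrite -powR_mulrn ?powR_ge0 // -powRrM divfK //.
have hNx : N x != 0 by rewrite gt_eqF.
move: (lieg_entry ell Z i0 x i j h0 hZ hs).
rewrite /cts_Kbar /cts_gbar /CKO /=.
generalize (lieg (gell ell) Z x) => L hL.
rewrite divV_PZ // (divV_Z _ _ _ _ h0 hZ).
rewrite !mxE hL (first_eq i0 i h0) (divV_Z _ _ _ _ h0 hZ) -/q.
set D := pd i0 (fun y => Z y 0 i0) x.
have hc0 : c != 0 by rewrite gt_eqF.
have hP0 : c `^ q != 0 by rewrite gt_eqF.
have [ej|hij] := eqVneq i j; last first.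
  by rewrite /=; ring.
subst j; rewrite ?eqxx /= exprMn er2 eq2 e2q hmu /kappa.
have [->|hi] := eqVneq i i0.
  rewrite ?eqxx /=; field.
  by rewrite hn hNx hc0 hP0.
rewrite ?(negbTE hi) /=; field.
by rewrite hn hNx hc0 hP0.
Qed.


Lemma powR_half2 (c a : R) : 0 <= c -> (c `^ (a / 2)) ^+ 2 = c `^ a.
Proof.
by move=> hc; rewrite -powR_mulrn ?powR_ge0 // -powRrM divfK.
Qed.

Lemma gbar_eq (ell : 'I_n -> R) (c : R) : 0 < c ->
  cts_gbar (gell ell) (fun _ => c) = gell (rell (c `^ ((qexp R n - 2) / 2)) ell).
Proof.
move=> hc; apply: funext => x; apply/matrixP => i j; rewrite !mxE.
case: eqP => _; last by rewrite mulr0.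
by rewrite /rell exprMn powR_half2 // ltW.
Qed.

Lemma ds1_resc (t : pt -> R) r (ell : 'I_n -> R) :
  ds1sq_tensor t r ell = ds1sq_tensor t 1 (rell r ell).
Proof. by apply: funext => x; apply/matrixP => i j; rewrite !mxE mul1r. Qed.

Lemma gen_sol (ell : 'I_n -> R) (mu taus : R) (N : pt -> R) (Z : pt -> pt) (c : R) :
  (3 <= n)%N -> (forall i, 0 < ell i) ->
  torus_periodic N -> smooth N -> (forall x, 0 < N x) -> s1_dependent N ->
  torus_periodic Z -> smooth_vf Z -> s1_dependent Z ->
  (forall x (i : 'I_n), ~~ is_first i -> Z x 0 i = 0) ->
  0 < c -> mu = taus * c `^ qexp R n ->
  cts_solution (gell ell) (fun x => mu *: sigflat ell x) taus Z N (fun _ => c) Z /\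
  cts_gbar (gell ell) (fun _ => c) = gell (rell (c `^ ((qexp R n - 2) / 2)) ell) /\
  cts_Kbar (gell ell) (fun x => mu *: sigflat ell x) taus Z N (fun _ => c) Z =
  ds1sq_tensor (fun x => taus + (c `^ qexp R n)^-1 / N x * divV (gell ell) Z x)
     (c `^ ((qexp R n - 2) / 2)) ell.
Proof.
move=> n3 hell tN sN pN dN tZ sZ dZ hZ hc hmu.
have n0 : (0 < n)%N by apply: leq_trans n3.
pose i0 : 'I_n := Ordinal n0.
have h0 : is_first i0 by [].
have KE := Kbar_eq ell mu taus c N Z i0 n3 h0 hc hmu pN sZ hZ dZ.
have GE := gbar_eq ell c hc.
split; last by [].
split; first by move=> _.
split; first by [].
split; first exact: smooth_cst.
split; first by [].
split; first by [].
rewrite GE KE ds1_resc.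
set P := c `^ qexp R n.
set r := c `^ ((qexp R n - 2) / 2).
have hr : 0 < r by apply: powR_gt0.
have dZ0 : s1_dependent (fun y : pt => Z y 0 i0).
  by move=> a b hab; rewrite (dZ a b hab).
have tE : (fun x => taus + P^-1 / N x * divV (gell ell) Z x) =
   (fun x => taus + P^-1 / N x * pd i0 (fun y => Z y 0 i0) x).
  by apply: funext => x; rewrite (divV_Z _ _ _ _ h0 hZ).
rewrite tE; apply: (constraints_diag _ _ _ h0).
- by move=> i; rewrite /rell mulf_neq0 // gt_eqF.
- move=> a b hab; rewrite (dN a b hab).
  by rewrite (pd_s1_dep _ i0 dZ0 _ _ hab).
- move=> x.
  have dN' : derivable N x (unitv R i0) := smooth_derivable N i0 x sN.
  have dD : derivable (pd i0 (fun y => Z y 0 i0)) x (unitv R i0).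
    exact: (smooth_derivable _ i0 x (smooth_pd _ i0 (sZ i0))).
  have dNi : derivable (fun y => (N y)^-1) x (unitv R i0).
    by apply: derivableV => //; rewrite gt_eqF.
  have -> : (fun x0 => taus + P^-1 / N x0 * pd i0 (fun y => Z y 0 i0) x0) =
     cst taus + (cst P^-1 * (fun y => (N y)^-1)) * pd i0 (fun y => Z y 0 i0).
    by apply: funext.
  apply: derivableD; first exact: derivable_cst.
  apply: derivableM => //; apply: derivableM => //; exact: derivable_cst.
Qed.

End Helpers.

Theorem proposition7p3 (R : realType) (n : nat) (ell : 'I_n -> R)
    (mu taus : R) (N : 'rV[R]_n -> R) (Z : 'rV[R]_n -> 'rV[R]_n) :
  (3 <= n)%N ->
  (forall i, 0 < ell i) ->
  torus_periodic N -> smooth N -> (forall x, 0 < N x) -> s1_dependent N ->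
  torus_periodic Z -> smooth_vf Z -> s1_dependent Z ->
  (forall x (i : 'I_n), ~~ is_first i -> Z x 0 i = 0) ->
  let g := gell ell in
  let sigma := fun x => mu *: sigflat ell x in
  ((((0 < mu) && (0 < taus)) || ((mu < 0) && (taus < 0))) ->
     let c := (mu / taus) `^ (1 / qexp R n) in
     let r := c `^ ((qexp R n - 2) / 2) in
     let taubar := fun x => taus + (c `^ (qexp R n))^-1 / N x * divV g Z x in
     cts_solution g sigma taus Z N (fun _ => c) Z /\
     r = (mu / taus) `^ (1 / n%:R) /\
     cts_gbar g (fun _ => c) = gell (rell r ell) /\
     cts_Kbar g sigma taus Z N (fun _ => c) Z = ds1sq_tensor taubar r ell) /\
  (mu = 0 -> taus = 0 ->
   forall c : R, 0 < c ->
     let r := c `^ ((qexp R n - 2) / 2) in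
     let taubar := fun x => (c `^ (qexp R n))^-1 / N x * divV g Z x in
     cts_solution g sigma taus Z N (fun _ => c) Z /\
     cts_gbar g (fun _ => c) = gell (rell r ell) /\
     cts_Kbar g sigma taus Z N (fun _ => c) Z = ds1sq_tensor taubar r ell).
Proof.
move=> n3 hell tN sN pN dN tZ sZ dZ hZ g sigma; split.
  move=> hsign c r taubar.
  have hm : 0 < mu / taus.
    case/orP: hsign => /andP[a b]; first exact: divr_gt0.
    by rewrite -mulrNN -invrN divr_gt0 // oppr_gt0.
  have htaus : taus != 0.
    by case/orP: hsign => /andP[a b]; [rewrite gt_eqF | rewrite lt_eqF].
  have hc : 0 < c by apply: powR_gt0.
  have n3R : (3 : R) <= n%:R by rewrite ler_nat.
  have hn : (n%:R : R) != 0 by apply/eqP => e; rewrite e in n3R; lra.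
  have hn2 : (n%:R : R) - 2 != 0 by apply/eqP => e; lra.
  have hq : qexp R n != 0.
    rewrite /qexp mulf_neq0 ?invr_eq0 // mulf_neq0 //.
  have cq : c `^ qexp R n = mu / taus.
    by rewrite /c -powRrM div1r mulVf // powRr1 // ltW.
  have hmu : mu = taus * c `^ qexp R n by rewrite cq mulrC divfK.
  have [S [G K]] := gen_sol R n ell mu taus N Z c n3 hell tN sN pN dN tZ sZ dZ hZ hc hmu.
  split => //; split => //.
  rewrite /r /c -powRrM; congr (_ `^ _); rewrite /qexp.
  by field; rewrite hn hn2.
move=> mu0 taus0 c hc r taubar.
have hmu : mu = taus * c `^ qexp R n by rewrite mu0 taus0 mul0r.
have [S [G K]] := gen_sol R n ell mu taus N Z c n3 hell tN sN pN dN tZ sZ dZ hZ hc hmu.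
split => //; split => //.
rewrite K; congr ds1sq_tensor; apply: funext => x.
by rewrite taus0 add0r.
Qed.
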